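(* Let $|\Psi\rangle_{A\bar AE}$ be a pure (sub-)normalized state with $\mathcal H_A$ an $n$-qubit system. Let $\rho_{AE}:=\sum_z|z\rangle\langle z|_A\,{\rm Tr}_{\bar A}(|\Psi\rangle\langle\Psi|)\,|z\rangle\langle z|_A$ (the state after a $Z$-basis measurement of $A$), and define the phase distribution $\Pr(X=x):=\langle\tilde x|_A\rho^\Psi_A|\tilde x\rangle_A$ for $x\in\{0,1\}^n$, where $\rho^\Psi_A$ is the reduced state of $|\Psi\rangle$ on $A$. If $H_{1/2}(X)\le H^{\rm th}_{1/2}$ for a constant $H^{\rm th}_{1/2}$, then $$H_{\min}(\rho_{AE}|E)\ge n-H^{\rm th}_{1/2}.$$
   Context: $|z\rangle$ is the computational basis of $n$ qubits and $|\tilde x\rangle:=2^{-n/2}\sum_z(-1)^{x\cdot z}|z\rangle$. R\'enyi entropy of order $1/2$: $H_{1/2}(X):=2\log_2\sum_x\sqrt{\Pr(X=x)}$. $H_{\min}(\rho_{AE}|E)$ is the maximum $\lambda$ with $2^{-\lambda}I_A\otimes\sigma_E\ge\rho_{AE}$ for some normalized state $\sigma_E$. *)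

(* Defs.v *)
(* Complex scalars: an arbitrary numClosedFieldType C
   (e.g. algC); finite-dimensional Hilbert spaces are C^T for finTypes T,
   operators are functions T -> T -> C. *)
From HB Require Import structures.
From mathcomp Require Import all_boot all_order all_algebra.
Set Implicit Arguments. Unset Strict Implicit. Unset Printing Implicit Defensive.
Import Order.TTheory GRing.Theory Num.Theory.
Local Open Scope ring_scope.

Section Q.
Variable C : numClosedFieldType.

Definition op (T : finType) := T -> T -> C.

(* positive semidefinite: <v|M|v> >= 0 for all v (>= 0 in C means real, nonneg) *)
Definition psd (T : finType) (M : op T) : Prop :=
  forall v : T -> C, 0 <= \sum_i \sum_j (v i)^* * M i j * v j.

Definition trace (T : finType) (M : op T) : C := \sum_i M i i.

Definition is_state (T : finType) (M : op T) : Prop := psd M /\ trace M = 1.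

(* computational basis of n qubits: bit strings *)
Definition bits (n : nat) := {ffun 'I_n -> bool}.

Definition sgn_dot n (x z : bits n) : C := (-1) ^+ (\sum_i (x i && z i) : nat).

Definition phase_ket n (x : bits n) (z : bits n) : C :=
  sqrtC ((2 ^+ n)^-1) * sgn_dot x z.

Variables (n : nat) (TB TE : finType).
(* tripartite vector |Psi>_{A Abar E} with A = n qubits *)
Variable psi : bits n -> TB -> TE -> C.

Definition rhoA : op (bits n) :=
  fun a a' => \sum_b \sum_e psi a b e * (psi a' b e)^*.

Definition rhoAE_pre : op (bits n * TE)%type :=
  fun ae ae' => \sum_b psi ae.1 b ae.2 * (psi ae'.1 b ae'.2)^*.

Definition rhoAE : op (bits n * TE)%type :=
  fun ae ae' => (ae.1 == ae'.1)%:R * rhoAE_pre ae ae'.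

Definition phase_prob (x : bits n) : C :=
  \sum_z \sum_z' (phase_ket x z)^* * rhoA z z' * phase_ket x z'.

End Q.

Definition idA_tensor (C : numClosedFieldType) (TA TE : finType) (sigma : op C TE)
  : op C (TA * TE)%type :=
  fun ae ae' => (ae.1 == ae'.1)%:R * sigma ae.2 ae'.2.

(* Main.v *)
Require Import Defs.
From HB Require Import structures.
From mathcomp Require Import all_boot all_order all_algebra ring.
Import Order.TTheory GRing.Theory Num.Theory.
Set Implicit Arguments. Unset Strict Implicit. Unset Printing Implicit Defensive.
Local Open Scope ring_scope.


Section H.
Variable C : numClosedFieldType.
Variable n : nat.

Lemma sgn_prod (x z : bits n) :
  sgn_dot C x z = \prod_i (-1) ^+ (x i && z i).
Proof.
rewrite /sgn_dot; apply: (big_morph (fun m : nat => (-1 : C) ^+ m)).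
  by move=> u v; rewrite exprD.
by [].
Qed.

Lemma sgn_conj (x z : bits n) : (sgn_dot C x z)^* = sgn_dot C x z.
Proof. by rewrite /sgn_dot rmorphXn rmorphN1. Qed.

Lemma sgn_sq (x z : bits n) : sgn_dot C x z * sgn_dot C x z = 1.
Proof. by rewrite /sgn_dot -expr2 sqrr_sign. Qed.

Lemma sgn_orth (z z' : bits n) :
  \sum_x sgn_dot C x z * sgn_dot C x z' = 2 ^+ n * (z == z')%:R.
Proof.
under eq_bigr => x _ do rewrite !sgn_prod -big_split /=.
rewrite -(bigA_distr_bigA (fun i (b : bool) => (-1 : C) ^+ (b && z i) * (-1) ^+ (b && z' i))).
under eq_bigr => i _ do rewrite big_bool /= expr0 mulr1.
have [<-|nz] := eqVneq z z'.
  under eq_bigr => i _ do rewrite -expr2 sqrr_sign.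
  by rewrite (prodr_const _ (1 + 1 : C)) card_ord mulr1.
rewrite /= mulr0.
have [i Hi] : exists i, z i != z' i.
  apply/existsP; move: nz; apply: contraNT; rewrite negb_exists => /forallP H.
  by apply/eqP/ffunP => i; apply/eqP; have := H i; rewrite negbK.
rewrite (bigD1 i) //=.
by move: Hi; case: (z i); case: (z' i) => //= _; rewrite ?expr0 ?expr1 ?mul1r ?mulr1 ?addNr ?mul0r.
Qed.





Lemma two_n_neq0 : (2 ^+ n : C) != 0.
Proof. by rewrite expf_neq0 // pnatr_eq0. Qed.

Lemma inv2n_ge0 : 0 <= ((2 ^+ n)^-1 : C).
Proof. by rewrite invr_ge0 exprn_ge0 // ler0n. Qed.

Lemma k_conj (x z : bits n) : (phase_ket C x z)^* = phase_ket C x z.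
Proof.
rewrite /phase_ket rmorphM /= sgn_conj geC0_conj //.
by rewrite sqrtC_ge0 inv2n_ge0.
Qed.

Lemma k_sq (x z : bits n) : phase_ket C x z * phase_ket C x z = (2 ^+ n)^-1.
Proof. by rewrite /phase_ket mulrACA -expr2 sqrtCK sgn_sq mulr1. Qed.

Lemma sum_delta (T : finType) (a : T) (F : T -> C) :
  \sum_z (a == z)%:R * F z = F a.
Proof.
rewrite (bigD1 a) //= eqxx mul1r big1 ?addr0 // => z Hz.
by rewrite eq_sym (negbTE Hz) mul0r.
Qed.

Lemma k_orth (z z' : bits n) :
  \sum_x phase_ket C x z * phase_ket C x z' = (z == z')%:R.
Proof.
under eq_bigr => x _ do rewrite /phase_ket mulrACA -expr2 sqrtCK.
by rewrite -mulr_sumr sgn_orth mulrA mulVf ?mul1r // two_n_neq0.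
Qed.
Lemma swap_sum (I : finType) (F : I -> I -> C) :
  \sum_x \sum_y F y x = \sum_x \sum_y F x y.
Proof. by rewrite exchange_big. Qed.

Lemma CS (I : finType) (a b : I -> C) :
  (\sum_i a i * (b i)^*) * (\sum_i a i * (b i)^*)^*
   <= (\sum_i a i * (a i)^*) * (\sum_i b i * (b i)^*).
Proof.
set T := fun x y => a x * (a x)^* * (b y * (b y)^*).
set L := fun x y => a x * (b x)^* * (a y * (b y)^*)^*.
have ER : (\sum_i a i * (a i)^*) * (\sum_i b i * (b i)^*) = \sum_x \sum_y T x y.
  by rewrite mulr_suml; apply: eq_bigr => x _; rewrite mulr_sumr.
have EL : (\sum_i a i * (b i)^*) * (\sum_i a i * (b i)^*)^* = \sum_x \sum_y L x y.
  rewrite rmorph_sum /= mulr_suml; apply: eq_bigr => x _; rewrite mulr_sumr.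
  by apply: eq_bigr => y _.
have D0 : 0 <= \sum_x \sum_y (a x * b y - a y * b x) * (a x * b y - a y * b x)^*.
  by apply: sumr_ge0 => x _; apply: sumr_ge0 => y _; apply: mul_conjC_ge0.
have E : forall x y, (a x * b y - a y * b x) * (a x * b y - a y * b x)^*
   = (T x y + T y x) - (L x y + L y x).
  move=> x y; rewrite /T /L rmorphB !rmorphM /= !conjCK; ring.
have D1 : 0 <= \sum_x \sum_y ((T x y + T y x) - (L x y + L y x)).
  by move: D0; congr (_ <= _); apply: eq_bigr => x _; apply: eq_bigr => y _; rewrite E.
rewrite -subr_ge0 ER EL.
move: D1.
under eq_bigr => x _ do rewrite sumrB !big_split /=.
rewrite sumrB !big_split /=.
have ST : \sum_x \sum_y T y x = \sum_x \sum_y T x y by rewrite exchange_big.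
have SL : \sum_x \sum_y L y x = \sum_x \sum_y L x y by rewrite exchange_big.
rewrite ST SL.
have -> : forall u v : C, u + u - (v + v) = 2 * (u - v) by move=> u v; ring.
by rewrite pmulr_rge0.
Qed.

Definition qf (T : finType) (M : op C T) (w : T -> C) :=
  \sum_i \sum_j (w i)^* * M i j * w j.

Lemma qf_lin (T : finType) (c : C) (M N : op C T) w :
  qf (fun i j => c * M i j - N i j) w = c * qf M w - qf N w.
Proof.
rewrite /qf mulr_sumr -sumrB; apply: eq_bigr => i _.
rewrite mulr_sumr -sumrB; apply: eq_bigr => j _; ring.
Qed.

Lemma quad (TB TE : finType) (F : TB -> TE -> C) (w : TE -> C) :
  qf (fun e e' => \sum_b F b e * (F b e')^*) w =
  \sum_b (\sum_e (w e)^* * F b e) * (\sum_e (w e)^* * F b e)^*.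
Proof.
rewrite /qf.
under eq_bigr => e _ do under eq_bigr => e' _ do rewrite mulr_sumr mulr_suml.
under eq_bigr => e _ do rewrite exchange_big.
rewrite exchange_big; apply: eq_bigr => b _.
rewrite rmorph_sum mulr_suml; apply: eq_bigr => e _.
rewrite mulr_sumr; apply: eq_bigr => e' _.
rewrite rmorphM /= conjCK; ring.
Qed.

Lemma sum_pair (A B : finType) (F : (A * B)%type -> C) :
  \sum_p F p = \sum_a \sum_b F (a, b).
Proof. by rewrite (pair_bigA _ (fun a b => F (a, b))); apply: eq_bigr => -[]. Qed.

Lemma qf_pair (A B : finType) (M : op C (A * B)%type) (N : A -> A -> B -> B -> C)
  (HM : forall a a' e e', M (a, e) (a', e') = (a == a')%:R * N a a' e e') v :
  qf M v = \sum_a qf (N a a) (fun e => v (a, e)).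
Proof.
rewrite /qf sum_pair; apply: eq_bigr => a _; apply: eq_bigr => e _.
rewrite sum_pair.
have E : forall a' e', (v (a, e))^* * M (a, e) (a', e') * v (a', e')
  = (a == a')%:R * ((v (a, e))^* * N a a' e e' * v (a', e')) by move=> a' e'; rewrite HM; ring.
under eq_bigr => a' _ do under eq_bigr => e' _ do rewrite E.
by under eq_bigr => a' _ do rewrite -mulr_sumr; rewrite sum_delta.
Qed.
End H.


Section P.
Variables (C : numClosedFieldType) (n : nat) (TB TE : finType).
Variable psi : bits n -> TB -> TE -> C.

Definition phi (x : bits n) (b : TB) (e : TE) : C :=
  \sum_z phase_ket C x z * psi z b e.

Lemma phi_inv a b e : \sum_x phase_ket C x a * phi x b e = psi a b e.
Proof.
rewrite /phi.
under eq_bigr => x _ do rewrite mulr_sumr.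
rewrite exchange_big /=.
under eq_bigr => z _ do (under eq_bigr => x _ do rewrite mulrA; rewrite -mulr_suml k_orth).
exact: sum_delta.
Qed.

Lemma prob_phi x :
  phase_prob psi x = \sum_b \sum_e phi x b e * (phi x b e)^*.
Proof.
rewrite /phase_prob /rhoA /phi.
under eq_bigr => z _ do under eq_bigr => z' _ do
  (rewrite mulr_sumr mulr_suml; under eq_bigr => b _ do rewrite mulr_sumr mulr_suml).
under eq_bigr => z _ do rewrite exchange_big.
under eq_bigr => z _ do under eq_bigr => b _ do rewrite exchange_big.
rewrite exchange_big; apply: eq_bigr => b _.
rewrite exchange_big; apply: eq_bigr => e _.
rewrite rmorph_sum mulr_suml; apply: eq_bigr => z _.
rewrite mulr_sumr; apply: eq_bigr => z' _.
by rewrite rmorphM /= !k_conj; ring.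
Qed.

Lemma prob_ge0 x : 0 <= phase_prob psi x.
Proof.
by rewrite prob_phi; apply: sumr_ge0 => b _; apply: sumr_ge0 => e _; apply: mul_conjC_ge0.
Qed.

Lemma phi0 x b e : phase_prob psi x = 0 -> phi x b e = 0.
Proof.
rewrite prob_phi => H.
have H1 := psumr_eq0P (fun b _ => sumr_ge0 _ (fun e _ => mul_conjC_ge0 (phi x b e))) H.
have H2 := psumr_eq0P (fun e _ => mul_conjC_ge0 (phi x b e)) (H1 b isT).
by apply/eqP; rewrite -mul_conjC_eq0 H2.
Qed.
End P.

Lemma qf_scale (C : numClosedFieldType) (T : finType) (c : C) (M : op C T) w :
  qf (fun i j => c * M i j) w = c * qf M w.
Proof.
rewrite /qf mulr_sumr; apply: eq_bigr => i _.
rewrite mulr_sumr; apply: eq_bigr => j _; ring.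
Qed.

Lemma qf_sum (C : numClosedFieldType) (T I : finType) (M : I -> op C T) w :
  qf (fun i j => \sum_x M x i j) w = \sum_x qf (M x) w.
Proof.
rewrite /qf.
under eq_bigr => i _ do under eq_bigr => j _ do rewrite mulr_sumr mulr_suml.
under eq_bigr => i _ do rewrite exchange_big.
by rewrite exchange_big.
Qed.

Section Q2.
Variables (C : numClosedFieldType) (n : nat) (TB TE : finType).
Variable psi : bits n -> TB -> TE -> C.

Definition lam x := sqrtC (phase_prob psi x).
Definition SS := \sum_x lam x.
Definition gam (w : TE -> C) x b := \sum_e (w e)^* * phi psi x b e.
Definition GG w := \sum_x (lam x)^-1 * \sum_b gam w x b * (gam w x b)^*.
Definition sig' : op C TE := fun e e' =>
  SS^-1 * \sum_x (lam x)^-1 * \sum_b phi psi x b e * (phi psi x b e')^*.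

Lemma lam_ge0 x : 0 <= lam x.
Proof. by rewrite /lam sqrtC_ge0 prob_ge0. Qed.

Lemma SS_ge0 : 0 <= SS.
Proof. by apply: sumr_ge0 => x _; apply: lam_ge0. Qed.

Lemma lam0 w x b : lam x = 0 -> gam w x b = 0.
Proof.
move/eqP; rewrite sqrtC_eq0 => /eqP H.
by rewrite /gam big1 // => e _; rewrite phi0 // mulr0.
Qed.

Lemma GG_ge0 w : 0 <= GG w.
Proof.
apply: sumr_ge0 => x _; apply: mulr_ge0; first by rewrite invr_ge0 lam_ge0.
by apply: sumr_ge0 => b _; apply: mul_conjC_ge0.
Qed.

Lemma qf_sig' w : qf sig' w = SS^-1 * GG w.
Proof.
rewrite /sig' (qf_scale SS^-1 (fun e e' => \sum_x (lam x)^-1 * \sum_b phi psi x b e * (phi psi x b e')^*)).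
rewrite (qf_sum (fun x e e' => (lam x)^-1 * \sum_b phi psi x b e * (phi psi x b e')^*)).
congr (_ * _); apply: eq_bigr => x _.
by rewrite (qf_scale (lam x)^-1 (fun e e' => \sum_b phi psi x b e * (phi psi x b e')^*)) quad.
Qed.

Lemma rho_bound a w :
  qf (fun e e' => \sum_b psi a b e * (psi a b e')^*) w <= (2 ^+ n)^-1 * SS * GG w.
Proof.
rewrite quad.
have Ealpha : forall b, \sum_e (w e)^* * psi a b e = \sum_x phase_ket C x a * gam w x b.
  move=> b; under eq_bigr => e _ do rewrite -(phi_inv psi a b e) mulr_sumr.
  rewrite exchange_big; apply: eq_bigr => x _; rewrite /gam mulr_sumr.
  by apply: eq_bigr => e _; ring.
apply: le_trans (_ : _ <= \sum_b (2 ^+ n)^-1 * SS * \sum_x (lam x)^-1 * (gam w x b * (gam w x b)^*)) _.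
  apply: ler_sum => b _; rewrite Ealpha.
  pose sl x := sqrtC (lam x).
  have slc : forall x, (sl x)^* = sl x by move=> x; rewrite geC0_conj // sqrtC_ge0 lam_ge0.
  have := CS (fun x => phase_ket C x a * sl x) (fun x => (gam w x b / sl x)^*).
  have -> : \sum_i phase_ket C i a * sl i * (gam w i b / sl i)^*^* = \sum_x phase_ket C x a * gam w x b.
    apply: eq_bigr => x _; rewrite conjCK.
    have [l0|ln0] := eqVneq (lam x) 0.
      by rewrite lam0 // /sl l0 sqrtC0 !mul0r !mulr0.
    have sn0 : sl x != 0 by rewrite sqrtC_eq0.
    by field.
  have -> : \sum_i phase_ket C i a * sl i * (phase_ket C i a * sl i)^* = (2 ^+ n)^-1 * SS.
    rewrite /SS mulr_sumr; apply: eq_bigr => x _.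
    rewrite rmorphM /= k_conj slc mulrACA k_sq -expr2 sqrtCK //.
  have -> : \sum_i (gam w i b / sl i)^* * (gam w i b / sl i)^*^* = \sum_x (lam x)^-1 * (gam w x b * (gam w x b)^*).
    apply: eq_bigr => x _; rewrite conjCK rmorphM /= fmorphV /= slc.
    rewrite -[lam x]sqrtCK -/(sl x) expr2 invfM; ring.
  by [].
rewrite -mulr_sumr.
have -> : \sum_b \sum_x (lam x)^-1 * (gam w x b * (gam w x b)^*) = GG w.
  by rewrite /GG exchange_big; apply: eq_bigr => x _; rewrite mulr_sumr.
by [].
Qed.

Lemma tr_sig' : SS != 0 -> trace sig' = 1.
Proof.
move=> S0; rewrite /trace /sig' -mulr_sumr.
rewrite exchange_big /=.
under eq_bigr => x _ do rewrite -mulr_sumr exchange_big -prob_phi.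
rewrite (eq_bigr lam) ?mulVf // => x _.
have [l0|ln0] := eqVneq (lam x) 0.
  by rewrite l0 invr0 mul0r.
by rewrite -[phase_prob psi x]sqrtCK -/(lam x) expr2 mulKf.
Qed.
End Q2.

Theorem mainTheorem6 (C : numClosedFieldType) (n : nat) (TB TE : finType)
  (HE : (0 < #|TE|)%N)
  (psi : bits n -> TB -> TE -> C)
  (Hsub : \sum_a \sum_b \sum_e psi a b e * (psi a b e)^* <= 1)
  (t : C) (Ht : 0 < t)
  (Hth : (\sum_x sqrtC (phase_prob psi x)) ^+ 2 <= t) :
  exists sigma : op C TE,
    is_state sigma /\
    psd (fun ae ae' => t / 2 ^+ n * @idA_tensor C (bits n) TE sigma ae ae'
                       - rhoAE psi ae ae').
Proof.
case/card_gt0P: HE => e0 _.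
pose delta : op C TE := fun e e' => (e0 == e)%:R * (e0 == e')%:R.
have qfd : forall w, qf delta w = (w e0)^* * w e0.
  move=> w; rewrite /qf.
  have E : forall e e', (w e)^* * delta e e' * w e' = (e0 == e)%:R * ((e0 == e')%:R * ((w e)^* * w e')).
    by move=> e e'; rewrite /delta; ring.
  under eq_bigr => e _ do under eq_bigr => e' _ do rewrite E.
  under eq_bigr => e _ do rewrite -mulr_sumr sum_delta.
  by rewrite sum_delta.
have qfd0 : forall w, 0 <= qf delta w by move=> w; rewrite qfd mulrC mul_conjC_ge0.
have t2 : 0 <= t / 2 ^+ n by rewrite mulr_ge0 ?inv2n_ge0 // ltW.
exists (if SS psi == 0 then delta else sig' psi).
split.
  case: eqP => HS; split.
  - by move=> v; change (0 <= qf delta v).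
  - by rewrite /trace /delta sum_delta eqxx.
  - move=> v; change (0 <= qf (sig' psi) v).
    by rewrite qf_sig' mulr_ge0 ?invr_ge0 ?SS_ge0 ?GG_ge0.
  - by apply: tr_sig'; apply/eqP.
move=> v.
set sigma := (if SS psi == 0 then delta else sig' psi).
change (0 <= qf (fun ae ae' => t / 2 ^+ n * @idA_tensor C (bits n) TE sigma ae ae'
                       - rhoAE psi ae ae') v).
rewrite (qf_pair (N := fun a a' e e' => t / 2 ^+ n * sigma e e' - rhoAE_pre psi (a, e) (a', e'))); last first.
  by move=> a a' e e'; rewrite /idA_tensor /rhoAE /=; ring.
apply: sumr_ge0 => a _.
rewrite qf_lin subr_ge0 /rhoAE_pre /=.
apply: le_trans (rho_bound psi a _) _.
rewrite /sigma; case: eqP => HS.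
  by rewrite HS mulr0 mul0r mulr_ge0.
rewrite qf_sig'.
have E1 : (2 ^+ n)^-1 * SS psi * GG psi (fun e => v (a, e))
   = ((2 ^+ n)^-1 * ((SS psi)^-1 * GG psi (fun e => v (a, e)))) * SS psi ^+ 2.
  by field; rewrite two_n_neq0 andbT; apply/eqP.
have E2 : t / 2 ^+ n * ((SS psi)^-1 * GG psi (fun e => v (a, e)))
   = ((2 ^+ n)^-1 * ((SS psi)^-1 * GG psi (fun e => v (a, e)))) * t by ring.
rewrite E1 E2 ler_wpM2l //.
by rewrite !mulr_ge0 ?inv2n_ge0 ?invr_ge0 ?SS_ge0 ?GG_ge0.
Qed.
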